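(* Assume $Y = \{y \in \mathbb{R}^m : Ay = b,\ y\ge 0\}$ with $A$ of full row rank, and that the linear program $z^* := \min\{c^\top x + d^\top y : Tx + Qy = h,\ x\in X,\ y\in Y\}$ has a finite optimal value. Let $\hat\alpha$ be an optimal solution of $$\max_{\alpha\in\mathbb{R}^p}\Big\{-\alpha^\top h + \sigma_X(c + T^\top\alpha) + \sigma_Y(Q^\top\alpha + d)\Big\},$$ let $B$ be an optimal basis for $\min\{(Q^\top\hat\alpha + d)^\top y : y \in Y\}$, and let $C_B$ be the associated corner. Then $$\inf\{c^\top x + \theta : x \in X,\ (h - Tx,\theta) \in \mathrm{epi}(f_{C_B})\} = z^*,$$ i.e., the facets of $\mathrm{epi}(f_{C_B})$ (corner Benders' cuts) together with $x\in X$ recover the bound $z^*$; moreover the Lagrangian cut $\hat\alpha^\top(h - Tx) + \theta \ge \sigma_{\mathrm{epi}(f_Y)}(\hat\alpha,1)$ is valid for $\{(x,\theta) : (h-Tx,\theta)\in\mathrm{epi}(f_{C_B})\}$.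
   Context: $X\subseteq\mathbb{R}^n$ is a nonempty polyhedron; $T\in\mathbb{R}^{p\times n}$, $Q\in\mathbb{R}^{p\times m}$, $h\in\mathbb{R}^p$, $c\in\mathbb{R}^n$, $d\in\mathbb{R}^m$. For $\mathcal{X}\subseteq\mathbb{R}^k$, $\sigma_{\mathcal{X}}(\alpha) := \inf_{x\in\mathcal{X}}\alpha^\top x$ ($\sigma_{\mathcal{X}}(\alpha,\alpha_0)$ at a concatenated vector). For $\mathcal{Y}\subseteq\mathbb{R}^m$, $f_{\mathcal{Y}}(w) := \inf_{y\in\mathcal{Y}}\{d^\top y : Qy = w\}$, $\mathrm{epi}(f_{\mathcal{Y}}) := \{(w,\theta) : \theta \ge f_{\mathcal{Y}}(w)\}$. A basis is a set $B\subseteq[m]$ with $A_B$ square invertible, $N := [m]\setminus B$; $B$ is optimal for $\min\{g^\top y : y\in Y\}$ if $A_B^{-1}b\ge 0$ and $g_N^\top - g_B^\top A_B^{-1}A_N \ge 0$. The corner associated with $B$ is $C_B := \{y\in\mathbb{R}^m : Ay = b,\ y_N \ge 0\}$. *)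

(* Defs.v *)
From HB Require Import structures.
From mathcomp Require Import all_boot all_order all_algebra.
From mathcomp Require Import boolp classical_sets reals constructive_ereal ereal.
Set Implicit Arguments. Unset Strict Implicit. Unset Printing Implicit Defensive.
Import Order.TTheory GRing.Theory Num.Theory.
Local Open Scope ring_scope.
Local Open Scope classical_set_scope.

Section Defs.
Variable R : realType.

Definition dotv {n} (u v : 'cV[R]_n) : R := \sum_(i < n) u i 0 * v i 0.

Definition vle {n} (u v : 'cV[R]_n) : Prop := forall i, u i 0 <= v i 0.

Definition polyhedron {n} (X : set 'cV[R]_n) : Prop :=
  exists k (G : 'M[R]_(k, n)) (g : 'cV[R]_k), X = [set x | vle (G *m x) g].

Definition sigma {n} (S : set 'cV[R]_n) (a : 'cV[R]_n) : \bar R :=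
  ereal_inf [set (dotv a x)%:E | x in S].

Definition fval {m p} (Q : 'M[R]_(p, m)) (d : 'cV[R]_m) (S : set 'cV[R]_m)
  (w : 'cV[R]_p) : \bar R :=
  ereal_inf [set (dotv d y)%:E | y in [set y | S y /\ Q *m y = w]].

Definition epi {m p} (Q : 'M[R]_(p, m)) (d : 'cV[R]_m) (S : set 'cV[R]_m)
  : set ('cV[R]_p * R) :=
  [set wt | (fval Q d S wt.1 <= wt.2%:E)%E].

Definition sigma_pair {p} (E : set ('cV[R]_p * R)) (a : 'cV[R]_p) (a0 : R) : \bar R :=
  ereal_inf [set (dotv a wt.1 + a0 * wt.2)%:E | wt in E].

Definition polyY {q m} (A : 'M[R]_(q, m)) (b : 'cV[R]_q) : set 'cV[R]_m :=
  [set y | A *m y = b /\ vle 0 y].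

(* A basis is encoded by an injective enumeration f : 'I_q -> 'I_m of B,
   with A_B := colsub f A square invertible; N = complement of codom f. *)
Definition is_basis {q m} (A : 'M[R]_(q, m)) (f : 'I_q -> 'I_m) : Prop :=
  injective f /\ colsub f A \in unitmx.

Definition optimal_basis {q m} (A : 'M[R]_(q, m)) (b : 'cV[R]_q)
  (g : 'cV[R]_m) (f : 'I_q -> 'I_m) : Prop :=
  is_basis A f /\
  vle 0 (invmx (colsub f A) *m b) /\
  (forall j : 'I_m, j \notin codom f ->
     0 <= g j 0 - ((rowsub f g)^T *m invmx (colsub f A) *m A) 0 j).

Definition corner {q m} (A : 'M[R]_(q, m)) (b : 'cV[R]_q) (f : 'I_q -> 'I_m)
  : set 'cV[R]_m :=
  [set y | A *m y = b /\ forall j : 'I_m, j \notin codom f -> 0 <= y j 0].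

Definition dual_obj {n m p} (X : set 'cV[R]_n) (Y : set 'cV[R]_m)
  (T : 'M[R]_(p, n)) (Q : 'M[R]_(p, m)) (h : 'cV[R]_p) (c : 'cV[R]_n)
  (d : 'cV[R]_m) (a : 'cV[R]_p) : \bar R :=
  ((- dotv a h)%:E + sigma X (c + T^T *m a) + sigma Y (Q^T *m a + d))%E.

End Defs.

(* Main.v *)
Require Import Defs.
From HB Require Import structures.
From mathcomp Require Import all_boot all_order all_algebra.
From mathcomp Require Import boolp classical_sets reals constructive_ereal ereal.
From mathcomp Require Import lra.
From Stdlib Require Import List.
Set Implicit Arguments. Unset Strict Implicit. Unset Printing Implicit Defensive.
Import Order.TTheory GRing.Theory Num.Theory.
Local Open Scope ring_scope.
Local Open Scope classical_set_scope.

Definition ineq (R : realFieldType) := ((nat -> R) * R)%type.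
Definition dotN (R : realFieldType) N (a x : nat -> R) := \sum_(i < N) a i * x i.
Definition satI (R : realFieldType) N (x : nat -> R) (u : ineq R) := dotN N u.1 x <= u.2.
Definition addI (R : realFieldType) (u v : ineq R) : ineq R :=
  (fun i => u.1 i + v.1 i, u.2 + v.2).
Definition sclI (R : realFieldType) (k : R) (u : ineq R) : ineq R :=
  (fun i => k * u.1 i, k * u.2).

Inductive cone (R : realFieldType) (S : list (ineq R)) : ineq R -> Prop :=
| cone_gen u : In u S -> cone S u
| cone_zero : cone S (fun _ => 0, 0)
| cone_add u v : cone S u -> cone S v -> cone S (addI u v)
| cone_scl k u : 0 <= k -> cone S u -> cone S (sclI k u)
| cone_weak u b : cone S u -> u.2 <= b -> cone S (u.1, b).

Lemma dotN_add (R : realFieldType) N (a b x : nat -> R) :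
  dotN N (fun i => a i + b i) x = dotN N a x + dotN N b x.
Proof. by rewrite /dotN -big_split; apply: eq_bigr => i _; rewrite mulrDl. Qed.

Lemma dotN_scl (R : realFieldType) N k (a x : nat -> R) :
  dotN N (fun i => k * a i) x = k * dotN N a x.
Proof. by rewrite /dotN mulr_sumr; apply: eq_bigr => i _; rewrite mulrA. Qed.

Lemma dotN0 (R : realFieldType) N (x : nat -> R) : dotN N (fun _ => 0) x = 0.
Proof. by rewrite /dotN big1 // => i _; rewrite mul0r. Qed.

Lemma cone_sound (R : realFieldType) N (S : list (ineq R)) x u :
  cone S u -> (forall v, In v S -> satI N x v) -> satI N x u.
Proof.
move=> c H; elim: c => {u} [u /H //| |u v _ Hu _ Hv|k u k0 _ Hu|u b _ Hu ub].
- by rewrite /satI dotN0.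
- by rewrite /satI /= dotN_add lerD.
- by rewrite /satI /= dotN_scl ler_wpM2l.
- by rewrite /satI /=; apply: le_trans ub.
Qed.

Lemma cone_mono (R : realFieldType) (S S' : list (ineq R)) u :
  (forall v, In v S -> cone S' v) -> cone S u -> cone S' u.
Proof.
move=> H; elim=> {u} [u /H //| |u v _ Hu _ Hv|k u k0 _ Hu|u b _ Hu ub].
- exact: cone_zero.
- exact: cone_add.
- exact: cone_scl.
- exact: cone_weak.
Qed.

Lemma exists_between (R : realFieldType) (ls us : list R) :
  (forall l u, In l ls -> In u us -> l <= u) ->
  exists t, (forall l, In l ls -> l <= t) /\ (forall u, In u us -> t <= u).
Proof.
elim: ls => [|l ls IH] H.
  exists (foldr Num.min 0 us); split => // u.
  elim: us {H} => // u' us IHu /= [<-|/IHu]; first by rewrite ge_min lexx.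
  by move=> h; rewrite ge_min h orbT.
have [t [Ht1 Ht2]] : exists t, (forall l, In l ls -> l <= t) /\ (forall u, In u us -> t <= u).
  by apply: IH => l' u Hl Hu; apply: H => //; right.
exists (Num.max l t); split.
  by move=> l' /= [<-|/Ht1 h]; rewrite le_max ?lexx // h orbT.
by move=> u Hu; rewrite ge_max Ht2 // andbT; apply: H => //; left.
Qed.

Lemma dotN_S (R : realFieldType) N (a x : nat -> R) :
  dotN N.+1 a x = dotN N a x + a N * x N.
Proof. by rewrite /dotN big_ord_recr. Qed.

Lemma dotN_ext (R : realFieldType) N (a x y : nat -> R) :
  (forall i, (i < N)%N -> x i = y i) -> dotN N a x = dotN N a y.
Proof. by move=> H; apply: eq_bigr => i _; rewrite H. Qed.

Lemma cone_coord0 (R : realFieldType) (S : list (ineq R)) j u :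
  (forall v, In v S -> v.1 j = 0) -> cone S u -> u.1 j = 0.
Proof.
move=> H; elim=> {u} [u /H //| //|u v _ Hu _ Hv|k u k0 _ Hu|u b _ Hu ub] /=.
- by rewrite Hu Hv addr0.
- by rewrite Hu mulr0.
- by [].
Qed.

Lemma farkas (R : realFieldType) N (S : list (ineq R)) :
  ~ (exists x, forall u, In u S -> satI N x u) ->
  exists u, cone S u /\ (forall i, (i < N)%N -> u.1 i = 0) /\ u.2 < 0.
Proof.
elim: N S => [|N IH] S Hinf.
  have [u [Hu Hs]] : exists u, In u S /\ ~ satI 0 (fun _ => 0) u.
    apply: contra_notP Hinf => H; exists (fun _ => 0) => u Hu.
    by apply: contra_notP H => Hn; exists u.
  exists u; split; first exact: cone_gen.
  split => // ; move: Hs; rewrite /satI /dotN big_ord0.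
  by move/negP; rewrite -ltNge.
pose s (u : ineq R) := u.1 N.
pose Z := filter (fun u => s u == 0) S.
pose P := filter (fun u => 0 < s u) S.
pose Ng := filter (fun u => s u < 0) S.
pose comb (p q : ineq R) := addI (sclI (- s q) p) (sclI (s p) q).
pose S' := Z ++ flat_map (fun p => map (fun q => comb p q) Ng) P.
have HS' : forall v, In v S' -> cone S v.
  move=> v; rewrite in_app_iff => -[|].
    by rewrite filter_In => -[Hv _]; apply: cone_gen.
  rewrite in_flat_map => -[p [Hp]]; rewrite in_map_iff => -[q [<- Hq]].
  move: Hp Hq; rewrite !filter_In => -[Hp sp] [Hq sq].
  apply: cone_add; apply: cone_scl; try exact: cone_gen.
    by rewrite oppr_ge0 ltW.
  by rewrite ltW.
have [u [Hu [H0 H2]]] : exists u, cone S' u /\ (forall i, (i < N)%N -> u.1 i = 0) /\ u.2 < 0.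
  apply: IH => -[x' Hx']; apply: Hinf.
  pose lowb (q : ineq R) := (q.2 - dotN N q.1 x') / s q.
  pose upb (q : ineq R) := (q.2 - dotN N q.1 x') / s q.
  have Hlu : forall l w, In l (map lowb Ng) -> In w (map upb P) -> l <= w.
    move=> l w; rewrite !in_map_iff => -[q [<- Hq]] [p [<- Hp]].
    have Hc : In (comb p q) S'.
      rewrite in_app_iff; right; rewrite in_flat_map; exists p; split => //.
      by rewrite in_map_iff; exists q.
    move: (Hx' _ Hc) Hp Hq; rewrite /satI /= dotN_add !dotN_scl.
    rewrite !filter_In => Hin [_ sp] [_ sq].
    rewrite /lowb /upb.
    set Ap := dotN N p.1 x' in Hin *; set Aq := dotN N q.1 x' in Hin *.
    rewrite ler_pdivlMr // mulrAC ler_ndivrMr //.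
    nra.
  have [t [Ht1 Ht2]] := exists_between Hlu.
  exists (fun i => if i == N then t else x' i) => v Hv.
  rewrite /satI dotN_S eqxx.
  rewrite (@dotN_ext _ _ _ _ x'); last by move=> i; rewrite ltn_neqAle => /andP[/negbTE -> _].
  have [sn|sp|s0] := ltgtP (s v) 0.
  - have : In (lowb v) (map lowb Ng) by rewrite in_map_iff; exists v; rewrite filter_In.
    move/Ht1; rewrite /lowb ler_ndivrMr // => h.
    rewrite /s in sn h; lra.
  - have : In (upb v) (map upb P) by rewrite in_map_iff; exists v; rewrite filter_In.
    move/Ht2; rewrite /upb ler_pdivlMr // => h.
    rewrite /s in sp h; lra.
  - have : In v S' by rewrite in_app_iff; left; rewrite filter_In s0 eqxx.
    move/Hx'; rewrite /satI /s in s0 *; rewrite s0 mul0r addr0 //.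
have HN : u.1 N = 0.
  apply: cone_coord0 Hu => v; rewrite in_app_iff => -[|].
    by rewrite filter_In => -[_ /eqP].
  rewrite in_flat_map => -[p [Hp]]; rewrite in_map_iff => -[q [<- Hq]] /=.
  by rewrite /s mulNr mulrC addNr.
exists u; split; last first.
  split => // i; rewrite ltnS leq_eqVlt => /orP[/eqP ->//|]; exact: H0.
exact: cone_mono HS' Hu.
Qed.

Lemma cone_app (R : realFieldType) (S1 S2 : list (ineq R)) u :
  cone (S1 ++ S2) u -> exists u1 u2, cone S1 u1 /\ cone S2 u2 /\
    (forall i, u.1 i = u1.1 i + u2.1 i) /\ u.2 = u1.2 + u2.2.
Proof.
elim=> {u} [u|| u v _ [u1 [u2 [c1 [c2 [e1 e2]]]]] _ [v1 [v2 [d1 [d2 [f1 f2]]]]]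
  |k u k0 _ [u1 [u2 [c1 [c2 [e1 e2]]]]]|u b _ [u1 [u2 [c1 [c2 [e1 e2]]]]] ub].
- rewrite in_app_iff => -[H|H].
    exists u, (fun _ => 0, 0); do !split; [exact: cone_gen|exact: cone_zero|..];
      by move=> *; rewrite /= addr0.
  exists (fun _ => 0, 0), u; do !split; [exact: cone_zero|exact: cone_gen|..];
    by move=> *; rewrite /= add0r.
- exists (fun _ => 0, 0), (fun _ => 0, 0); do !split; try exact: cone_zero;
    by move=> *; rewrite /= addr0.
- exists (addI u1 v1), (addI u2 v2); do !split; try exact: cone_add.
    by move=> i /=; rewrite e1 f1 addrACA.
  by rewrite /= e2 f2 addrACA.
- exists (sclI k u1), (sclI k u2); do !split; try exact: cone_scl.
    by move=> i /=; rewrite e1 mulrDr.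
  by rewrite /= e2 mulrDr.
- exists (u1.1, u1.2 + (b - u.2)), u2; do !split => //.
  + by apply: cone_weak => //; rewrite lerDl subr_ge0.
  + by rewrite /= e2; lra.
Qed.

Lemma cone_single (R : realFieldType) (o : ineq R) u :
  cone [:: o] u -> exists k, 0 <= k /\ (forall i, u.1 i = k * o.1 i) /\ k * o.2 <= u.2.
Proof.
elim=> {u} [u|| u v _ [k1 [k10 [e1 f1]]] _ [k2 [k20 [e2 f2]]]
  |k u k0 _ [k1 [k10 [e1 f1]]]|u b _ [k1 [k10 [e1 f1]]] ub].
- move=> /= [<-|//]; exists 1; split; first exact: ler01.
  by split => [i|]; rewrite mul1r.
- by exists 0; split => //; split => [i|]; rewrite mul0r.
- exists (k1 + k2); split; first by rewrite addr_ge0.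
  split => [i|] /=; first by rewrite e1 e2 mulrDl.
  by rewrite mulrDl lerD.
- exists (k * k1); split; first by rewrite mulr_ge0.
  split => [i|] /=; first by rewrite e1 mulrA.
  by rewrite -mulrA ler_wpM2l.
- by exists k1; split => //; split => //=; apply: le_trans ub.
Qed.

Lemma sum_delta (R : realFieldType) p (r : 'I_p) (F : 'I_p -> R) :
  \sum_(r' < p) (r' == r)%:R * F r' = F r.
Proof.
rewrite (bigD1 r) //= eqxx mul1r big1 ?addr0 // => i /negbTE ->; by rewrite mul0r.
Qed.

Lemma cone_eqs (R : realFieldType) p (rowf : 'I_p -> ineq R) u :
  cone (flat_map (fun r => [:: rowf r; sclI (-1) (rowf r)]) (enum 'I_p)) u ->
  exists al : 'I_p -> R, (forall i, u.1 i = \sum_(r < p) al r * (rowf r).1 i)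
     /\ \sum_(r < p) al r * (rowf r).2 <= u.2.
Proof.
elim=> {u} [u|| u v _ [a1 [e1 f1]] _ [a2 [e2 f2]]
  |k u k0 _ [a1 [e1 f1]]|u b _ [a1 [e1 f1]] ub].
- rewrite in_flat_map => -[r [_ /= [<-|[<-|//]]]].
    exists (fun r' => (r' == r)%:R); split => [i|]; by rewrite sum_delta.
  exists (fun r' => - (r' == r)%:R); split => [i|] /=.
    by rewrite (eq_bigr (fun r' => (r' == r)%:R * (-1 * (rowf r').1 i))) ?sum_delta //
      => r' _; rewrite mulN1r mulrN mulNr.
  by rewrite (eq_bigr (fun r' => (r' == r)%:R * (-1 * (rowf r').2))) ?sum_delta //
      => r' _; rewrite mulN1r mulrN mulNr.
- by exists (fun _ => 0); split => [i|]; rewrite big1 // => r _; rewrite mul0r.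
- exists (fun r => a1 r + a2 r); split => [i|] /=.
    by rewrite e1 e2 -big_split; apply: eq_bigr => r _; rewrite mulrDl.
  by rewrite (eq_bigr (fun r => a1 r * (rowf r).2 + a2 r * (rowf r).2))
     ?big_split ?lerD // => r _; rewrite mulrDl.
- exists (fun r => k * a1 r); split => [i|] /=.
    by rewrite e1 mulr_sumr; apply: eq_bigr => r _; rewrite mulrA.
  rewrite (eq_bigr (fun r => k * (a1 r * (rowf r).2))) -?mulr_sumr ?ler_wpM2l //.
  by move=> r _; rewrite mulrA.
- by exists a1; split => //; apply: le_trans ub.
Qed.

Lemma dotN_sum (R : realFieldType) N p (al : 'I_p -> R) (F : 'I_p -> nat -> R) z :
  dotN N (fun i => \sum_(r < p) al r * F r i) z = \sum_(r < p) al r * dotN N (F r) z.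
Proof.
rewrite /dotN; under eq_bigr do rewrite mulr_suml.
rewrite exchange_big /=; apply: eq_bigr => r _.
by rewrite mulr_sumr; apply: eq_bigr => i _; rewrite mulrA.
Qed.

Lemma dotN_eqf (R : realFieldType) N (a a' z : nat -> R) :
  (forall i, a i = a' i) -> dotN N a z = dotN N a' z.
Proof. by move=> H; apply: eq_bigr => i _; rewrite H. Qed.

Lemma In_seq (T : eqType) (x : T) s : x \in s -> In x s.
Proof.
elim: s => // y s IH /predU1P [->|/IH]; simpl; auto.
Qed.

Lemma In_enum (T : finType) (x : T) : In x (enum T).
Proof. by apply: In_seq; rewrite mem_enum. Qed.

Definition ofrow (R : realType) a k (M : 'M[R]_(a,k)) (r : 'I_a) : nat -> R :=
  fun i => if (insub i : option 'I_k) is Some j then M r j else 0.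
Definition comb (R : realType) n (F G : nat -> R) : nat -> R :=
  fun i => if (i < n)%N then F i else G (i - n)%N.
Definition zer (R : realType) : nat -> R := fun _ => 0.
Definition xof (R : realType) n (z : nat -> R) : 'cV[R]_n := \col_(i < n) z i.
Definition yof (R : realType) n m (z : nat -> R) : 'cV[R]_m := \col_(i < m) z (n + i)%N.
Definition zfun (R : realType) n m (x : 'cV[R]_n) (y : 'cV[R]_m) : nat -> R :=
  comb n (ofrow x^T 0) (ofrow y^T 0).

Lemma ofrowE (R : realType) a k (M : 'M[R]_(a,k)) r (j : 'I_k) : ofrow M r j = M r j.
Proof. by rewrite /ofrow valK. Qed.

Lemma dotN_comb (R : realType) n m (F G z : nat -> R) :
  dotN (n + m) (comb n F G) z = dotN n F z + dotN m G (fun i => z (n + i)%N).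
Proof.
rewrite /dotN big_split_ord /=; congr (_ + _); apply: eq_bigr => i _ /=.
  by rewrite /comb ltn_ord.
by rewrite /comb ltnNge leq_addr /= addKn.
Qed.

Lemma dotN_ofrow (R : realType) a k (M : 'M[R]_(a,k)) r (z : nat -> R) :
  dotN k (ofrow M r) z = (M *m xof k z) r 0.
Proof. by rewrite mxE; apply: eq_bigr => i _; rewrite ofrowE mxE. Qed.

Lemma dotN_ofrowy (R : realType) n a m (M : 'M[R]_(a,m)) r (z : nat -> R) :
  dotN m (ofrow M r) (fun i => z (n + i)%N) = (M *m yof n m z) r 0.
Proof. by rewrite mxE; apply: eq_bigr => i _; rewrite ofrowE mxE. Qed.

Lemma xof_zfun (R : realType) n m (x : 'cV[R]_n) (y : 'cV[R]_m) : xof n (zfun x y) = x.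
Proof.
apply/matrixP => i j; rewrite !mxE /zfun /comb ltn_ord ofrowE mxE.
by rewrite (ord1 j).
Qed.

Lemma yof_zfun (R : realType) n m (x : 'cV[R]_n) (y : 'cV[R]_m) : yof n m (zfun x y) = y.
Proof.
apply/matrixP => i j; rewrite !mxE /zfun /comb ltnNge leq_addr /= addKn ofrowE mxE.
by rewrite (ord1 j).
Qed.

Lemma dotv_mx (R : realType) n (u v : 'cV[R]_n) : dotv u v = (u^T *m v) 0 0.
Proof. by rewrite mxE; apply: eq_bigr => i _; rewrite mxE. Qed.

Lemma dotN_zer (R : realType) N (z : nat -> R) : dotN N (@zer R) z = 0.
Proof. exact: dotN0. Qed.

Lemma duality (R : realType) n m p k q (G : 'M[R]_(k,n)) (gg : 'cV[R]_k)
  (T : 'M[R]_(p,n)) (Q : 'M[R]_(p,m)) (h : 'cV[R]_p) (c : 'cV[R]_n) (d : 'cV[R]_m)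
  (A : 'M[R]_(q,m)) (b : 'cV[R]_q) (zstar del : R) :
  0 < del ->
  ereal_inf [set (dotv c xy.1 + dotv d xy.2)%:E | xy in
     [set xy : 'cV[R]_n * 'cV[R]_m | vle (G *m xy.1) gg /\ polyY A b xy.2
        /\ T *m xy.1 + Q *m xy.2 = h]] = zstar%:E ->
  exists al : 'cV[R]_p, forall x y, vle (G *m x) gg -> polyY A b y ->
     zstar - del <= dotv c x + dotv d y + dotv al (T *m x + Q *m y - h).
Proof.
move=> d0 Hinf.
set F := [set xy | _] in Hinf.
have Hlow : forall x y, F (x, y) -> zstar <= dotv c x + dotv d y.
  move=> x y Fxy; rewrite -lee_fin -Hinf; apply: ge_ereal_inf.
  by exists ((dotv c x + dotv d y)%:E) => //; exists (x, y).
have [[x0 y0] F0] : exists xy, F xy.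
  apply: contrapT => H; move: Hinf.
  have -> : [set (dotv c xy.1 + dotv d xy.2)%:E | xy in F] = set0.
    by apply/seteqP; split => // e [xy Fxy]; exfalso; apply: H; exists xy.
  by rewrite ereal_inf0.
pose S1 : list (ineq R) :=
  map (fun r => (comb n (ofrow G r) (@zer R), gg r 0)) (enum 'I_k) ++
  flat_map (fun r => [:: (comb n (@zer R) (ofrow A r), b r 0);
                        (comb n (@zer R) (ofrow (- A) r), - b r 0)]) (enum 'I_q) ++
  map (fun j => (comb n (@zer R) (ofrow (- 1%:M : 'M[R]_m) j), 0)) (enum 'I_m).
pose rowf (r : 'I_p) : ineq R := (comb n (ofrow T r) (ofrow Q r), h r 0).
pose S2 := flat_map (fun r => [:: rowf r; sclI (-1) (rowf r)]) (enum 'I_p).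
pose o : ineq R := (comb n (ofrow c^T 0) (ofrow d^T 0), zstar - del).
have Hrow : forall z r, dotN (n + m) (rowf r).1 z = (T *m xof n z + Q *m yof n m z) r 0.
  by move=> z r; rewrite /rowf /= dotN_comb dotN_ofrow dotN_ofrowy [RHS]mxE.
have Ho : forall z, dotN (n + m) o.1 z = dotv c (xof n z) + dotv d (yof n m z).
  by move=> z; rewrite /o /= dotN_comb dotN_ofrow dotN_ofrowy !dotv_mx.
have HS1 : forall z, (forall v, In v S1 -> satI (n + m) z v) ->
    vle (G *m xof n z) gg /\ polyY A b (yof n m z).
  move=> z Hz; split; [|split].
  - move=> r; have := Hz (comb n (ofrow G r) (@zer R), gg r 0).
    rewrite /satI /= dotN_comb dotN_ofrow dotN_zer addr0; apply.
    by rewrite in_app_iff; left; rewrite in_map_iff; exists r; split => //; apply: In_enum.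
  - apply/matrixP => r j; rewrite (ord1 j).
    have Hin : forall v, In v [:: (comb n (@zer R) (ofrow A r), b r 0);
                        (comb n (@zer R) (ofrow (- A) r), - b r 0)] -> In v S1.
      move=> v Hv; rewrite in_app_iff; right; rewrite in_app_iff; left.
      by rewrite in_flat_map; exists r; split => //; apply: In_enum.
    have := Hz _ (Hin _ (or_introl erefl)); have := Hz _ (Hin _ (or_intror (or_introl erefl))).
    rewrite /satI /= !dotN_comb !dotN_ofrowy !dotN_zer !add0r mulNmx mxE => h1 h2.
    by apply/eqP; rewrite eq_le h2 /= -lerN2.
  - move=> j; have := Hz (comb n (@zer R) (ofrow (- 1%:M : 'M[R]_m) j), 0).
    rewrite /satI /= dotN_comb dotN_ofrowy dotN_zer add0r mulNmx mul1mx !mxE oppr_le0.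
    apply.
    rewrite in_app_iff; right; rewrite in_app_iff; right.
    by rewrite in_map_iff; exists j; split => //; apply: In_enum.
have HS1' : forall x y, vle (G *m x) gg -> polyY A b y ->
    forall v, In v S1 -> satI (n + m) (zfun x y) v.
  move=> x y Hx [Hy1 Hy2] v; rewrite !in_app_iff => -[|[|]].
  - rewrite in_map_iff => -[r [<- _]].
    by rewrite /satI /= dotN_comb dotN_ofrow dotN_zer addr0 xof_zfun.
  - rewrite in_flat_map => -[r [_ /= [<-|[<-|//]]]];
      rewrite /satI /= dotN_comb dotN_ofrowy dotN_zer add0r yof_zfun ?mulNmx Hy1 ?mxE //.
  - rewrite in_map_iff => -[j [<- _]].
    rewrite /satI /= dotN_comb dotN_ofrowy dotN_zer add0r yof_zfun mulNmx mul1mx !mxE.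
    by rewrite oppr_le0; move: (Hy2 j); rewrite mxE.
have Hinfeas : ~ (exists z, forall v, In v (S1 ++ S2 ++ [:: o]) -> satI (n + m) z v).
  move=> [z Hz].
  have [HX HY] : vle (G *m xof n z) gg /\ polyY A b (yof n m z).
    by apply: HS1 => v Hv; apply: Hz; rewrite in_app_iff; left.
  have HE : T *m xof n z + Q *m yof n m z = h.
    apply/matrixP => r j; rewrite (ord1 j).
    have Hin : forall v, In v [:: rowf r; sclI (-1) (rowf r)] -> In v (S1 ++ S2 ++ [:: o]).
      move=> v Hv; rewrite in_app_iff; right; rewrite in_app_iff; left.
      by rewrite in_flat_map; exists r; split => //; apply: In_enum.
    have := Hz _ (Hin _ (or_introl erefl)); have := Hz _ (Hin _ (or_intror (or_introl erefl))).
    rewrite /satI /= dotN_scl Hrow /= => h1 h2.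
    apply/eqP; rewrite eq_le h2 /=; rewrite !mulN1r lerN2 in h1; exact: h1.
  have : satI (n + m) z o by apply: Hz; rewrite !in_app_iff; right; right; left.
  rewrite /satI Ho /=.
  have := Hlow _ _ (conj HX (conj HY HE)); lra.
have [u [Hu [Hu0 Hu2]]] := farkas Hinfeas.
have [u1 [u23 [c1 [c23 [e1 e2]]]]] := cone_app Hu.
have [u2 [u3 [c2 [c3 [e3 e4]]]]] := cone_app c23.
have [al [ea fa]] := cone_eqs c2.
have [kk [k0 [ek fk]]] := cone_single c3.
have Key : forall z, (forall v, In v S1 -> satI (n + m) z v) ->
   0 < kk * (dotN (n + m) o.1 z - o.2)
       + \sum_(r < p) al r * (dotN (n + m) (rowf r).1 z - (rowf r).2).
  move=> z Hz.
  have s1 := cone_sound c1 Hz; rewrite /satI in s1.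
  have z0 : dotN (n + m) u.1 z = 0.
    by rewrite /dotN big1 // => i _; rewrite Hu0 ?mul0r.
  rewrite (@dotN_eqf _ (n + m) _ _ z e1) dotN_add (@dotN_eqf _ (n + m) _ _ z e3) dotN_add (@dotN_eqf _ (n + m) _ _ z ea) dotN_sum
     (@dotN_eqf _ (n + m) _ _ z ek) dotN_scl in z0.
  rewrite (eq_bigr (fun r => al r * dotN (n + m) (rowf r).1 z - al r * (rowf r).2));
    last by move=> r _; rewrite mulrBr.
  rewrite sumrB mulrBr.
  move: z0 fa fk Hu2 s1; rewrite e2 e4.
  set s_a := \sum_(r < p) _; set s_h := \sum_(r < p) _.
  lra.
have kpos : 0 < kk.
  have := Key _ (HS1' _ _ F0.1 F0.2.1).
  rewrite big1; last first.
    move=> r _; rewrite Hrow xof_zfun yof_zfun F0.2.2 /= subrr mulr0 //.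
  rewrite addr0 => H; rewrite lt_def k0 andbT; apply/eqP => kk0.
  by move: H; rewrite kk0 mul0r ltxx.
exists (\col_r (al r / kk)) => x y Hx Hy.
have := Key _ (HS1' _ _ Hx Hy).
rewrite Ho xof_zfun yof_zfun /=.
rewrite (eq_bigr (fun r => al r * ((T *m x + Q *m y - h) r 0))); last first.
  by move=> r _; rewrite Hrow xof_zfun yof_zfun !mxE.
have -> : dotv (\col_r (al r / kk)) (T *m x + Q *m y - h) =
   (\sum_(r < p) al r * ((T *m x + Q *m y - h) r 0)) / kk.
  rewrite /dotv mulr_suml; apply: eq_bigr => r _; rewrite mxE; by rewrite mulrAC.
set S := \sum_(r < p) _.
set t := S / kk.
have St : S = t * kk by rewrite /t divfK // gt_eqF.
rewrite St; set E := dotv c x + dotv d y => H.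
nra.
Qed.

Lemma dotvDl (R : realType) n (u v x : 'cV[R]_n) : dotv (u + v) x = dotv u x + dotv v x.
Proof. by rewrite /dotv -big_split; apply: eq_bigr => i _; rewrite mxE mulrDl. Qed.

Lemma dotvDr (R : realType) n (u x y : 'cV[R]_n) : dotv u (x + y) = dotv u x + dotv u y.
Proof. by rewrite /dotv -big_split; apply: eq_bigr => i _; rewrite mxE mulrDr. Qed.

Lemma dotvNr (R : realType) n (u x : 'cV[R]_n) : dotv u (- x) = - dotv u x.
Proof. by rewrite /dotv -sumrN; apply: eq_bigr => i _; rewrite mxE mulrN. Qed.

Lemma dotv_mulT (R : realType) p n (T : 'M[R]_(p,n)) a x :
  dotv (T^T *m a) x = dotv a (T *m x).
Proof. by rewrite !dotv_mx trmx_mul trmxK mulmxA. Qed.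

Lemma lin_id (R : realType) n m p (T : 'M[R]_(p,n)) (Q : 'M[R]_(p,m)) h c d al x y :
  dotv c x + dotv d y + dotv al (T *m x + Q *m y - h) =
  - dotv al h + dotv (c + T^T *m al) x + dotv (Q^T *m al + d) y.
Proof.
rewrite !dotvDl !dotvDr dotvNr !dotv_mulT; lra.
Qed.

Lemma dual_lb (R : realType) n m p (X : set 'cV[R]_n) (Y : set 'cV[R]_m)
  (T : 'M[R]_(p,n)) (Q : 'M[R]_(p,m)) h c d al (L : R) :
  X !=set0 -> Y !=set0 ->
  (forall x y, X x -> Y y -> L <= dotv c x + dotv d y + dotv al (T *m x + Q *m y - h)) ->
  (L%:E <= dual_obj X Y T Q h c d al)%E.
Proof.
move=> [x0 Xx0] [y0 Yy0] H.
set Fx := fun x => dotv (c + T^T *m al) x.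
set Gy := fun y => dotv (Q^T *m al + d) y.
set K := L + dotv al h.
have HK : forall x y, X x -> Y y -> K <= Fx x + Gy y.
  move=> x y Xx Yy; have := H x y Xx Yy; rewrite lin_id /Fx /Gy /K; lra.
have [s Hs] : exists s, sigma X (c + T^T *m al) = s%:E.
  have lo : ((K - Gy y0)%:E <= sigma X (c + T^T *m al))%E.
    apply/ereal_infP => e [x Xx <-]; rewrite lee_fin; have := HK x y0 Xx Yy0.
    rewrite /Fx; lra.
  have up : (sigma X (c + T^T *m al) <= (Fx x0)%:E)%E.
    by apply: ge_ereal_inf; exists (Fx x0) %:E => //; exists x0.
  move: lo up; case: (sigma X _) => [s _ _|//|//]; by exists s.
have loY : ((K - s)%:E <= sigma Y (Q^T *m al + d))%E.
  apply/ereal_infP => e [y Yy <-]; rewrite lee_fin.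
  have : (((K - Gy y)%:E <= sigma X (c + T^T *m al)))%E.
    apply/ereal_infP => e' [x Xx <-]; rewrite lee_fin; have := HK x y Xx Yy.
    rewrite /Fx; lra.
  by rewrite Hs lee_fin /Gy; lra.
rewrite /dual_obj Hs.
apply: (@le_trans _ _ ((- dotv al h)%:E + s%:E + (K - s)%:E)%E).
  by rewrite -!EFinD lee_fin /K; lra.
by apply: leeD.
Qed.

Lemma basic_sol (R : realType) q m (A : 'M[R]_(q,m)) b g (f : 'I_q -> 'I_m) :
  optimal_basis A b g f ->
  exists ybar, polyY A b ybar /\
    forall y, corner A b f y -> dotv g ybar <= dotv g y.
Proof.
move=> [[_ Hunit] [Hw Hr]].
set AB := colsub f A; set w := invmx AB *m b.
pose P : 'M[R]_(m,q) := \matrix_(j, i) (f i == j)%:R.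
have AP : A *m P = AB.
  apply/matrixP => r i; rewrite !mxE (bigD1 (f i)) //= mxE eqxx mulr1 big1 ?addr0 //.
  by move=> j /negbTE; rewrite mxE eq_sym => ->; rewrite mulr0.
have gP : g^T *m P = (rowsub f g)^T.
  apply/matrixP => r i; rewrite !mxE (bigD1 (f i)) //= !mxE eqxx mulr1 big1 ?addr0 //.
  by move=> j /negbTE; rewrite [P _ _]mxE eq_sym => ->; rewrite mulr0.
exists (P *m w); split; first split.
- by rewrite mulmxA AP /w mulmxA mulmxV // mul1mx.
- move=> j; rewrite !mxE; apply: sumr_ge0 => i _; rewrite mxE mulr_ge0 ?ler0n //.
  by move: (Hw i); rewrite mxE.
move=> y [Ay Cy].
set r := g^T - (rowsub f g)^T *m invmx AB *m A.
have e1 : g^T *m y = r *m y + (rowsub f g)^T *m w.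
  by rewrite /r mulmxBl -!mulmxA Ay subrK.
have r0 : forall i, r 0 (f i) = 0.
  move=> i; rewrite /r !mxE.
  have -> : \sum_j ((rowsub f g)^T *m invmx AB) 0 j * A j (f i) =
            (((rowsub f g)^T *m invmx AB) *m AB) 0 i.
    by rewrite [RHS]mxE; apply: eq_bigr => j _; rewrite [AB _ _]mxE.
  by rewrite mulmxKV // !mxE subrr.
have rpos : 0 <= (r *m y) 0 0.
  rewrite mxE; apply: sumr_ge0 => j _.
  have [/codomP [i ->]|jN] := boolP (j \in codom f); first by rewrite r0 mul0r.
  apply: mulr_ge0; last by move: (Cy j jN).
  by move: (Hr j jN); rewrite /r !mxE.
rewrite !dotv_mx e1 mulmxA gP [X in _ <= X]mxE.
by rewrite lerDr.
Qed.

Unset Implicit Arguments. Set Strict Implicit.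

Theorem mainTheorem6 (R : realType) (n m p q : nat)
  (X : set 'cV[R]_n) (T : 'M[R]_(p, n)) (Q : 'M[R]_(p, m)) (h : 'cV[R]_p)
  (c : 'cV[R]_n) (d : 'cV[R]_m) (A : 'M[R]_(q, m)) (b : 'cV[R]_q)
  (zstar : R) (ahat : 'cV[R]_p) (f : 'I_q -> 'I_m) :
  polyhedron X -> X !=set0 ->
  \rank A = q ->
  ereal_inf [set (dotv c xy.1 + dotv d xy.2)%:E | xy in
     [set xy : 'cV[R]_n * 'cV[R]_m |
        X xy.1 /\ polyY A b xy.2 /\ T *m xy.1 + Q *m xy.2 = h]] = zstar%:E ->
  (forall a : 'cV[R]_p,
     (dual_obj X (polyY A b) T Q h c d a <= dual_obj X (polyY A b) T Q h c d ahat)%E) ->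
  optimal_basis A b (Q^T *m ahat + d) f ->
  ereal_inf [set (dotv c xt.1 + xt.2)%:E | xt in
     [set xt : 'cV[R]_n * R |
        X xt.1 /\ epi Q d (corner A b f) (h - T *m xt.1, xt.2)]] = zstar%:E
  /\
  (forall (x : 'cV[R]_n) (theta : R),
     epi Q d (corner A b f) (h - T *m x, theta) ->
     (sigma_pair (epi Q d (polyY A b)) ahat 1
        <= (dotv ahat (h - T *m x) + theta)%:E)%E).
Proof.
move=> [k [G [gg HX]]] X0 _ Hz Hopt Hb.
set g := Q^T *m ahat + d.
have [ybar [Yb Hmin]] := basic_sol Hb.
have YC : forall y, polyY A b y -> corner A b f y.
  by move=> y [Ay Hy]; split => // j _; move: (Hy j); rewrite mxE.
have Y0 : polyY A b !=set0 by exists ybar.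
have Hdual : (zstar%:E <= dual_obj X (polyY A b) T Q h c d ahat)%E.
  have H : forall del, 0 < del -> ((zstar - del)%:E <= dual_obj X (polyY A b) T Q h c d ahat)%E.
    move=> del d0.
    have [al Hal] := @duality R n m p k q G gg T Q h c d A b zstar del d0 ltac:(by move: Hz; rewrite HX).
    apply: le_trans; last exact: (Hopt al).
    apply: dual_lb => // x y Xx Yy.
    by apply: Hal => //; rewrite HX in Xx.
  move: H; case: (dual_obj _ _ _ _ _ _ _ ahat) => [s|//|] H.
    rewrite lee_fin; apply/ler_addgt0Pr => e e0.
    by have := H e e0; rewrite lee_fin; lra.
  by rewrite leey.
  by have := H 1 ltr01; rewrite leeNy_eq.
have Hchain : forall x y, X x -> corner A b f y -> Q *m y = h - T *m x ->
    zstar <= dotv c x + dotv d y.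
  move=> x y Xx Cy Qy.
  rewrite -lee_fin; apply: (le_trans Hdual).
  have E0 : T *m x + Q *m y - h = 0 by rewrite Qy addrCA subrr addr0 subrr.
  have -> : dotv c x + dotv d y = - dotv ahat h + dotv (c + T^T *m ahat) x + dotv g y.
    rewrite -lin_id E0.
    have -> : dotv ahat 0 = 0 by rewrite /dotv big1 // => i _; rewrite mxE mulr0.
    by rewrite addr0.
  rewrite /dual_obj !EFinD; apply: leeD; first apply: leeD => //.
    by apply: ge_ereal_inf; eexists => //; exists x.
  apply: (@le_trans _ _ (dotv g ybar)%:E).
    by apply: ge_ereal_inf; eexists => //; exists ybar.
  by rewrite lee_fin Hmin.
split.
  apply/eqP; rewrite eq_le; apply/andP; split.
    rewrite -Hz; apply: ereal_inf_le_tmp => e [[x y] /= [Xx [Yy Exy]] <-].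
    exists (x, dotv d y) => //=; split => //.
    rewrite /epi /=; apply: ge_ereal_inf; eexists => //; exists y => //.
    by split; [apply: YC | rewrite -Exy addrC addKr].
  apply/ereal_infP => e [[x th] /= [Xx Hep] <-].
  have : ((zstar - dotv c x)%:E <= fval Q d (corner A b f) (h - T *m x))%E.
    apply/ereal_infP => e' [y [Cy Qy] <-]; rewrite lee_fin.
    by have := Hchain x y Xx Cy Qy; lra.
  move=> H1; have := le_trans H1 Hep; rewrite /= !lee_fin; lra.
move=> x th Hep.
have Hg : forall y, dotv g y = dotv ahat (Q *m y) + dotv d y.
  by move=> y; rewrite /g dotvDl dotv_mulT.
apply: (@le_trans _ _ (dotv g ybar)%:E).
  apply: ge_ereal_inf; exists (dotv ahat (Q *m ybar) + 1 * dotv d ybar)%:E; last first.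
    by rewrite mul1r Hg.
  exists (Q *m ybar, dotv d ybar) => //.
  rewrite /epi /=; apply: ge_ereal_inf; eexists => //; exists ybar => //.
have : ((dotv g ybar - dotv ahat (h - T *m x))%:E <= fval Q d (corner A b f) (h - T *m x))%E.
  apply/ereal_infP => e' [y [Cy Qy] <-]; rewrite lee_fin.
  by have := Hmin y Cy; rewrite (Hg y) Qy; lra.
move=> H1; have := le_trans H1 Hep; rewrite /= !lee_fin; lra.
Qed.
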